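(* Let $G$ be a finite group, $H\le G$ and $p$ a prime. Then $\mathfrak{p}_{H,p}=\mathfrak{p}_{O^p(H),p}$ as ideals of the Burnside $G$-Tambara functor $\underline{A}_G$.
   Context: $A(H)$ is the Burnside ring of a finite group $H$; for $I\le H$, $\varphi^I_{H,p}\colon A(H)\to\mathbb{Z}/p\mathbb{Z}$ is the ring map $X\mapsto|X^I|\bmod p$. $\underline{A}_G$ has $\underline{A}_G(G/L)=A(L)$ (with restrictions, transfers $K\times_L-$, norms $\mathrm{Map}_L(K,-)$ and conjugations). For $K\le G$, $\mathfrak{p}_{K,p}$ is the ideal with $\mathfrak{p}_{K,p}(G/L)=\bigcap_{I\le L,\ I\preccurlyeq_GK}\ker(\varphi^I_{L,p})$, where $I\preccurlyeq_GK$ means $I$ is conjugate in $G$ to a subgroup of $K$. $O^p(H)$ is the intersection of all normal subgroups of $H$ of $p$-power index. *)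

(* Defs.v *)
From mathcomp Require Import all_boot all_order all_algebra all_fingroup all_solvable.
Set Implicit Arguments. Unset Strict Implicit. Unset Printing Implicit Defensive.
Import GRing.Theory.
Local Open Scope group_scope.

Section Burnside.
Variable gT : finGroupType.

Definition Oup (p : nat) (H : {set gT}) : {set gT} :=
  \bigcap_(N : {group gT} | (N <| H) && p.-nat #|H : N|) N.

Definition subconj (G I K : {set gT}) : Prop := exists2 g, g \in G & I \subset K :^ g.

(* A (virtual) element of the Burnside ring A(L), represented as a formal
   difference [X] - [Y] of two finite L-sets (X, Y given by actions of L).
   Every element of A(L) has this form. *)
Record burnside_elt (L : {set gT}) := BurnsideElt {
  bX : finType; bactX : action L bX;
  bY : finType; bactY : action L bY }.

Definition mark (L : {set gT}) (Z : burnside_elt L) (I : {set gT}) : int :=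
  (#|'Fix_(bactX Z)(I)|%:Z - #|'Fix_(bactY Z)(I)|%:Z)%R.

Definition in_ker_phi (p : nat) (L : {set gT}) (Z : burnside_elt L) (I : {set gT}) : Prop :=
  (p%:Z %| mark Z I)%Z.

Definition in_frakp (G K : {set gT}) (p : nat) (L : {set gT}) (Z : burnside_elt L) : Prop :=
  forall I : {group gT}, I \subset L -> subconj G I K -> in_ker_phi p Z I.

End Burnside.

(* Main.v *)
Require Import Defs.
From mathcomp Require Import all_boot all_order all_algebra all_fingroup all_solvable.
From mathcomp Require Import ring.
Set Implicit Arguments. Unset Strict Implicit. Unset Printing Implicit Defensive.
Import GRing.Theory.
Section IntPart.
Local Open Scope ring_scope.
Lemma dvdz_congr (p a b a' b' : nat) : (a = a' %[mod p])%N -> (b = b' %[mod p])%N ->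
  (p%:Z %| a%:Z - b%:Z)%Z -> (p%:Z %| a'%:Z - b'%:Z)%Z.
Proof.
move=> ha hb.
rewrite (divn_eq a p)%N (divn_eq a' p) (divn_eq b p) (divn_eq b' p) ha hb.
rewrite !PoszD !PoszM => h.
have -> : ((a' %/ p)%:Z * p%:Z + (a' %% p)%:Z - ((b' %/ p)%:Z * p%:Z + (b' %% p)%:Z) =
  ((a %/ p)%:Z * p%:Z + (a' %% p)%:Z - ((b %/ p)%:Z * p%:Z + (b' %% p)%:Z)) +
  ((a' %/ p)%:Z - (a %/ p)%:Z - (b' %/ p)%:Z + (b %/ p)%:Z) * p%:Z)%R by ring.
by rewrite rpredD // dvdz_mull.
Qed.

End IntPart.

Section GrpPart.
Local Open Scope group_scope.
Lemma fix_mod (gT : finGroupType) (L : {group gT}) (sT : finType) (to : action L sT)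
  p (K I : {group gT}) : prime p -> I \subset L -> K <| I -> p.-nat #|I : K| ->
  #|'Fix_to(K)| = #|'Fix_to(I)| %[mod p].
Proof.
move=> pr sIL nKI pIK.
have [P sylP] := Sylow_exists p I.
have sPI := pHall_sub sylP. have pP := pHall_pgroup sylP.
case/andP: nKI => sKI nKI.
have nKP : P \subset 'N(K) := subset_trans sPI nKI.
have eqI : I :=: K <*> P.
  apply/eqP; rewrite eqEsubset join_subG sKI sPI andbT.
  have hallPK : p.-Hall(I / K) (P / K) := quotient_pHall nKP sylP.
  have pIK' : p.-group (I / K) by rewrite /pgroup card_quotient.
  have eq := pHall_id hallPK pIK'.
  by rewrite -(quotientSGK nKI (joing_subl K P)) -eq quotientS ?joing_subr.
have sKL := subset_trans sKI sIL. have sPL := subset_trans sPI sIL.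
rewrite (@pgroup_fix_mod _ _ _ to p P (afix to K) pP).
  by rewrite eqI afixYin.
have := acts_subnorm_fix to K; rewrite (setIidPr sKL) => h.
apply: subset_trans h.
by rewrite subsetI sPL.
Qed.

Lemma step (gT : finGroupType) (L K I : {group gT}) p (Z : burnside_elt L) :
  prime p -> I \subset L -> K <| I -> p.-nat #|I : K| ->
  in_ker_phi p Z K -> in_ker_phi p Z I.
Proof.
rewrite /in_ker_phi /mark => pr sIL nKI pIK.
by apply: dvdz_congr; apply: fix_mod.
Qed.

End GrpPart.

Theorem lemma4p15 (gT : finGroupType) (G H : {group gT}) (p : nat) :
  prime p -> H \subset G ->
  forall (L : {group gT}), L \subset G ->
  forall Z : burnside_elt L,
    in_frakp G H p Z <-> in_frakp G (Oup p H) p Z.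
Proof.
Local Open Scope group_scope.
move=> pr sHG L sLG Z.
have sOH : Oup p H \subset H.
  by apply: (bigcap_inf H); rewrite normal_refl indexgg.
split.
  move=> h I sIL [g Gg sI]; apply: h => //; exists g => //.
  by apply: subset_trans sI _; rewrite conjSg.
move=> h.
suff aux : forall n (I : {group gT}), (#|I| <= n)%N -> I \subset L ->
    forall g, g \in G -> I \subset H :^ g -> in_ker_phi p Z I.
  by move=> I sIL [g Gg sI]; exact: (aux _ I (leqnn _) sIL g Gg sI).
elim=> [|n IHn] I.
  by rewrite leqNgt cardG_gt0.
move=> leI sIL g Gg sI.
case: (boolP (I :^ g^-1 \subset Oup p H)) => [sO | nO].
  by apply: h => //; exists g => //; rewrite -sub_conjgV.
have : ~~ [forall N : {group gT}, ((N <| H) && p.-nat #|H : N|) ==> (I :^ g^-1 \subset N)].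
  apply: contra nO => /forallP hN; apply/bigcapsP => N PN; exact: (implyP (hN N) PN).
rewrite negb_forall => /existsP [N]; rewrite negb_imply => /andP [/andP [nNH pN] nIN].
rewrite sub_conjgV in nIN.
have nNgHg : N :^ g <| H :^ g by rewrite normalJ.
pose K := (I :&: N :^ g)%G.
have sKI : K \subset I := subsetIl _ _.
have nKI : K <| I := normalGI sI nNgHg.
have pKI : p.-nat #|I : K|.
  have nI : I \subset 'N(N :^ g) := subset_trans sI (normal_norm nNgHg).
  rewrite /K /= indexgI -card_quotient //.
  apply: (pgroupS (quotientS _ sI)).
  by rewrite /pgroup card_quotient ?normal_norm // indexJg.
apply: (step pr sIL nKI pKI).
apply: (IHn K _ (subset_trans sKI sIL) g Gg (subset_trans sKI sI)).
have prK : K \proper I.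
  rewrite properE sKI /=; apply: contra nIN => sIK.
  by apply: subset_trans sIK _; exact: subsetIr.
by rewrite -ltnS (leq_trans (proper_card prK) leI).
Qed.
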